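(* Let $D_2>0$, $k_3>0$, $S_2^{in}>0$, and let $\mu_2\in C^1(\mathbb R_+)$ satisfy $\mu_2(0)=0$, $\lim_{s\to\infty}\mu_2(s)=0$, and there exists $S_2^m>0$ with $\mu_2'>0$ on $(0,S_2^m)$ and $\mu_2'<0$ on $(S_2^m,\infty)$. Let $X_2^{1*}$ be a positive constant with $X_2^{1*}<S_2^{in}/k_3$. Define $f_2(x)=\mu_2(S_2^{in}-k_3x)$ on $[0,S_2^{in}/k_3]$, $g_2(x)=D_2(x-X_2^{1*})/x$ for $x>0$, and $x_1^m=(S_2^{in}-S_2^m)/k_3$. Then: \begin{enumerate} \item if $X_2^{1*}\ge x_1^m$, the equation $f_2(x)=g_2(x)$ has a unique solution in $(X_2^{1*},S_2^{in}/k_3)$; \item if $X_2^{1*}<x_1^m$, the equation $f_2(x)=g_2(x)$ has at least one solution in $(X_2^{1*},S_2^{in}/k_3)$; generically, there is an odd number of solutions in this interval. \end{enumerate} *)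

(* Defs.v *)
From Stdlib Require Import Reals Lra List.
From Coquelicot Require Import Coquelicot.
Open Scope R_scope.

Definition f2 (mu2 : R -> R) (S2in k3 : R) (x : R) : R := mu2 (S2in - k3 * x).

Definition g2 (D2 X21 : R) (x : R) : R := D2 * (x - X21) / x.

Definition x1m (S2in S2m k3 : R) : R := (S2in - S2m) / k3.

(* Main.v *)
Require Import Defs.
From Stdlib Require Import Reals Lra List.
From Coquelicot Require Import Coquelicot.
From Stdlib Require Import Classical Arith Ranalysis5.
Open Scope R_scope.


Lemma L1 (h : R -> R) (p d : R) : derivable_pt_lim h p d -> h p <> 0 ->
  exists del, del > 0 /\ forall y, Rabs (y - p) < del -> h y <> 0 /\ (h y < 0 <-> h p < 0).
Proof.
  intros Hd Hp.
  assert (Hc : continuity_pt h p) by (apply derivable_continuous_pt; exists d; exact Hd).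
  unfold continuity_pt, continue_in, limit1_in, limit_in in Hc.
  destruct (Hc (Rabs (h p))) as [alp [Ha Hy]]; [apply Rabs_pos_lt; auto|].
  exists alp; split; auto. intros y Hyp.
  destruct (Req_dec y p) as [->|Hne]; [split; [auto|tauto]|].
  assert (H := Hy y). simpl in H. unfold R_dist in H.
  assert (Habs: Rabs (h y - h p) < Rabs (h p)) by (apply H; split; [split; [exact I|auto]|exact Hyp]).
  revert Habs. unfold Rabs; repeat destruct Rcase_abs; intros; split; lra.
Qed.

Lemma L2 (h : R -> R) (p d : R) : derivable_pt_lim h p d -> h p = 0 -> d <> 0 ->
  exists del, del > 0 /\
   (forall y, p - del < y < p -> h y <> 0 /\ (h y < 0 <-> 0 < d)) /\
   (forall y, p < y < p + del -> h y <> 0 /\ (h y < 0 <-> d < 0)).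
Proof.
  intros Hd Hp Hd0.
  destruct (Hd (Rabs d)) as [del Hdel]; [apply Rabs_pos_lt; auto|].
  assert (key : forall y, y <> p -> Rabs (y - p) < del ->
     (h y / (y - p) < 0 <-> d < 0) /\ h y / (y - p) <> 0).
  { intros y Hne Hyd. assert (H := Hdel (y - p)).
    replace (p + (y - p)) with y in H by ring. rewrite Hp in H.
    replace ((h y - 0) / (y - p)) with (h y / (y - p)) in H by (field; lra).
    assert (Hlt : Rabs (h y / (y - p) - d) < Rabs d) by (apply H; [lra|auto]).
    revert Hlt. set (q := h y / (y - p)). unfold Rabs; repeat destruct Rcase_abs; intros; split; lra. }
  exists del; split; [apply cond_pos|split].
  - intros y Hy. destruct (key y) as [K1 K2]; [lra| rewrite Rabs_left; lra|].
    assert (E : h y = h y / (y - p) * (y - p)) by (field; lra).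
    set (q := h y / (y - p)) in *. rewrite E.
    split; [apply Rmult_integral_contrapositive_currified; lra|].
    split; intro; destruct (Rlt_dec q 0) as [Hq|Hq]; try nra; assert (q > 0) by lra; nra.
  - intros y Hy. destruct (key y) as [K1 K2]; [lra| rewrite Rabs_right; lra|].
    assert (E : h y = h y / (y - p) * (y - p)) by (field; lra).
    set (q := h y / (y - p)) in *. rewrite E.
    split; [apply Rmult_integral_contrapositive_currified; lra|].
    split; intro; destruct (Rlt_dec q 0) as [Hq|Hq]; try nra; assert (q > 0) by lra; nra.
Qed.

Definition Qp (h : R -> R) (a c : R) : Prop :=
  exists l : list R, NoDup l /\ (forall x, In x l <-> a < x < c /\ h x = 0) /\
   exists eps, eps > 0 /\ forall y, c - eps < y < c -> h y <> 0 /\ (h y < 0 <-> Nat.odd (length l) = true).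

Lemma odd_roots (h dh : R -> R) (a b : R) : a < b ->
  (forall x, a <= x <= b -> derivable_pt_lim h x (dh x)) -> h a > 0 -> h b < 0 ->
  (forall x, a < x < b -> h x = 0 -> dh x <> 0) ->
  exists l, NoDup l /\ (forall x, In x l <-> a < x < b /\ h x = 0) /\ Nat.odd (length l) = true.
Proof.
  intros Hab Hd Ha Hb Ht.
  assert (Lleft : forall p, a < p <= b -> exists del, del > 0 /\ exists P : Prop,
             forall y, p - del < y < p -> h y <> 0 /\ (h y < 0 <-> P)).
  { intros p Hp. destruct (Req_dec (h p) 0) as [H0|H0].
    - assert (p < b) by (destruct (Req_dec p b); [subst; lra | lra]).
      destruct (L2 h p (dh p)) as [del [Hdel [HL _]]]; [apply Hd; lra|auto|apply Ht; auto; lra|].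
      exists del; split; auto. exists (0 < dh p). exact HL.
    - destruct (L1 h p (dh p)) as [del [Hdel HL]]; auto; [apply Hd; lra|].
      exists del; split; auto. exists (h p < 0). intros y Hy. apply HL.
      rewrite Rabs_left; lra. }
  assert (Base : exists del, del > 0 /\ forall y, a < y < a + del -> Qp h a y).
  { destruct (L1 h a (dh a)) as [del [Hdel HL]]; [apply Hd; lra|lra|].
    exists del; split; auto. intros y Hy. exists nil. split; [constructor|split].
    - intros x; split; [simpl; tauto|]. intros [Hx Hx0].
      exfalso. destruct (HL x) as [HH _]; [rewrite Rabs_right; lra|]; apply HH; auto.
    - exists (y - a). split; [lra|]. intros z Hz.
      destruct (HL z) as [Hz1 Hz2]; [rewrite Rabs_right; lra|]. split; auto.
      simpl. split; intro; [lra|discriminate]. }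
  assert (Step3 : forall c, a < c <= b -> (forall y, a < y < c -> Qp h a y) -> Qp h a c).
  { intros c Hc HQ. destruct (Lleft c Hc) as [del [Hdel [P HP]]].
    set (m := Rmin del (c - a)).
    assert (Hm : 0 < m /\ m <= del /\ m <= c - a) by (unfold m; split; [apply Rmin_glb_lt; lra|split; [apply Rmin_l|apply Rmin_r]]).
    destruct (HQ (c - m/2)) as [l [Hnd [Hl [eps [Heps He]]]]]; [lra|].
    exists l; split; auto; split.
    - intros x; rewrite Hl; split; intros [Hx Hx0]; split; auto; try lra.
      split; [lra|]. destruct (Rlt_dec x (c - m/2)); auto. exfalso.
      destruct (HP x) as [HH _]; [lra|]; apply HH; auto.
    - exists (m/2); split; [lra|]. intros y Hy.
      destruct (HP y) as [Hy1 Hy2]; [lra|]. split; auto.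
      set (y0 := c - m/2 - Rmin eps (m/2) / 2).
      assert (Hmin : 0 < Rmin eps (m/2) <= m/2 /\ Rmin eps (m/2) <= eps)
        by (split; [split; [apply Rmin_glb_lt; lra|apply Rmin_r]|apply Rmin_l]).
      destruct (He y0) as [_ E1]; [unfold y0; lra|].
      destruct (HP y0) as [_ E2]; [unfold y0; lra|]. tauto. }
  assert (Step2 : forall c, a < c < b -> Qp h a c -> exists del, del > 0 /\ forall y, c < y < c + del -> Qp h a y).
  { intros c Hc [l [Hnd [Hl [eps [Heps He]]]]]. destruct (Req_dec (h c) 0) as [H0|H0].
    - destruct (L2 h c (dh c)) as [del [Hdel [HL HR]]]; [apply Hd; lra|auto|apply Ht; auto|].
      exists del; split; auto. intros y Hy. exists (c :: l). split; [|split].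
      + constructor; auto. intro Hin. apply Hl in Hin. lra.
      + intros x. simpl. rewrite Hl. split.
        * intros [<-|[Hx Hx0]]; split; auto; lra.
        * intros [Hx Hx0]. destruct (Rlt_dec x c); [right; split; auto; lra|].
          destruct (Req_dec x c); [left; auto|]. exfalso. destruct (HR x) as [HH _]; [lra|]; apply HH; auto.
      + exists (y - c); split; [lra|]. intros z Hz. destruct (HR z) as [Hz1 Hz2]; [lra|].
        split; auto.
        set (y0 := c - Rmin eps del / 2).
        assert (Hmin : 0 < Rmin eps del /\ Rmin eps del <= del /\ Rmin eps del <= eps)
          by (split; [apply Rmin_glb_lt; lra|split; [apply Rmin_r|apply Rmin_l]]).
        destruct (He y0) as [_ E1]; [unfold y0; lra|].
        destruct (HL y0) as [_ E2]; [unfold y0; lra|].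
        assert (Hd0 : dh c <> 0) by (apply Ht; auto).
        simpl length. rewrite Nat.odd_succ, <- Nat.negb_odd.
        rewrite Hz2. destruct (Nat.odd (length l)); simpl.
        * assert (0 < dh c) by (apply E2, E1; reflexivity). split; intro; [lra|discriminate].
        * assert (~ 0 < dh c) by (intro Hq; apply E2 in Hq; apply E1 in Hq; discriminate).
          split; intro; [reflexivity|lra].
    - destruct (L1 h c (dh c)) as [del [Hdel HL]]; auto; [apply Hd; lra|].
      exists del; split; auto. intros y Hy. exists l. split; auto; split.
      + intros x. rewrite Hl. split; intros [Hx Hx0]; split; auto; try lra.
        split; [lra|]. destruct (Rlt_dec x c); auto. exfalso.
        destruct (HL x) as [HH _]; [rewrite Rabs_right; lra|]; apply HH; auto.
      + exists (y - c); split; [lra|]. intros z Hz.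
        destruct (HL z) as [Hz1 Hz2]; [rewrite Rabs_right; lra|]. split; auto.
        set (y0 := c - Rmin eps del / 2).
        assert (Hmin : 0 < Rmin eps del /\ Rmin eps del <= del /\ Rmin eps del <= eps)
          by (split; [apply Rmin_glb_lt; lra|split; [apply Rmin_r|apply Rmin_l]]).
        destruct (He y0) as [_ E1]; [unfold y0; lra|].
        destruct (HL y0) as [_ E2]; [unfold y0; rewrite Rabs_left; lra|]. tauto. }
  set (S := fun x => a < x <= b /\ forall y, a < y <= x -> Qp h a y).
  destruct Base as [d0 [Hd0 HB]].
  assert (Hne : exists x, S x).
  { exists (a + Rmin d0 (b - a) / 2).
    assert (0 < Rmin d0 (b - a) /\ Rmin d0 (b - a) <= d0 /\ Rmin d0 (b-a) <= b - a)
      by (split; [apply Rmin_glb_lt; lra|split; [apply Rmin_l|apply Rmin_r]]).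
    split; [lra|]. intros y Hy. apply HB. lra. }
  assert (Hbd : bound S) by (exists b; intros x [Hx _]; lra).
  destruct (completeness S Hbd Hne) as [c [Hub Hlub]].
  destruct Hne as [x0 Hx0].
  assert (Hc1 : a < c) by (assert (H := Hub x0 Hx0); destruct Hx0; lra).
  assert (Hc2 : c <= b) by (apply Hlub; intros x [Hx _]; lra).
  assert (Hbel : forall y, a < y < c -> Qp h a y).
  { intros y Hy. destruct (classic (exists x, S x /\ y <= x)) as [[x [[Hx HSx] Hyx]]|Hn].
    - apply HSx; lra.
    - exfalso. assert (c <= y); [|lra]. apply Hlub. intros x Hx.
      destruct (Rle_dec x y); auto. exfalso. apply Hn. exists x; split; auto; lra. }
  assert (HQc : Qp h a c) by (apply Step3; auto).
  assert (Hcb : c = b).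
  { destruct (Req_dec c b); auto. exfalso.
    destruct (Step2 c) as [del [Hdel HS]]; [lra|auto|].
    assert (0 < Rmin del (b - c) /\ Rmin del (b - c) <= del /\ Rmin del (b-c) <= b - c)
      by (split; [apply Rmin_glb_lt; lra|split; [apply Rmin_l|apply Rmin_r]]).
    assert (HS' : S (c + Rmin del (b - c) / 2)).
    { split; [lra|]. intros y Hy. destruct (Rlt_dec y c); [apply Hbel; lra|].
      destruct (Req_dec y c); [subst; auto|]. apply HS; lra. }
    assert (H' := Hub _ HS'). lra. }
  subst c. destruct HQc as [l [Hnd [Hl [eps [Heps He]]]]].
  exists l; split; auto; split; auto.
  destruct (L1 h b (dh b)) as [del [Hdel HL]]; [apply Hd; lra|lra|].
  set (y0 := b - Rmin eps del / 2).
  assert (Hmin : 0 < Rmin eps del /\ Rmin eps del <= del /\ Rmin eps del <= eps)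
    by (split; [apply Rmin_glb_lt; lra|split; [apply Rmin_r|apply Rmin_l]]).
  destruct (He y0) as [_ E1]; [unfold y0; lra|].
  destruct (HL y0) as [_ E2]; [unfold y0; rewrite Rabs_left; lra|]. tauto.
Qed.

Theorem lemmaA2 (D2 k3 S2in S2m X21 : R) (mu2 : R -> R)
  (hD2 : 0 < D2) (hk3 : 0 < k3) (hS2in : 0 < S2in)
  (* mu2 is C^1 on R_+ *)
  (hmu_der : forall s, 0 <= s -> ex_derive mu2 s)
  (hmu_C1 : forall s, 0 <= s -> continuous (Derive mu2) s)
  (hmu0 : mu2 0 = 0)
  (hmu_lim : is_lim mu2 p_infty 0)
  (hS2m : 0 < S2m)
  (hinc : forall s, 0 < s < S2m -> Derive mu2 s > 0)
  (hdec : forall s, S2m < s -> Derive mu2 s < 0)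
  (hX : 0 < X21) (hXlt : X21 < S2in / k3) :
  (X21 >= x1m S2in S2m k3 ->
     exists! x, X21 < x < S2in / k3 /\ f2 mu2 S2in k3 x = g2 D2 X21 x)
  /\
  (X21 < x1m S2in S2m k3 ->
     (exists x, X21 < x < S2in / k3 /\ f2 mu2 S2in k3 x = g2 D2 X21 x)
     /\
     (* "generically": when every solution is nondegenerate (transversal) *)
     ((forall x, X21 < x < S2in / k3 -> f2 mu2 S2in k3 x = g2 D2 X21 x ->
          Derive (f2 mu2 S2in k3) x <> Derive (g2 D2 X21) x) ->
      exists l : list R, NoDup l /\
        (forall x, In x l <-> (X21 < x < S2in / k3 /\ f2 mu2 S2in k3 x = g2 D2 X21 x)) /\
        Nat.odd (length l) = true)).
Proof.
  set (E := S2in / k3) in *.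
  assert (HE : k3 * E = S2in) by (unfold E; field; lra).
  assert (dmu : forall s, 0 <= s -> derivable_pt_lim mu2 s (Derive mu2 s)).
  { intros s Hs. apply is_derive_Reals. apply Derive_correct. auto. }
  assert (mu_inc : forall s1 s2, 0 <= s1 < s2 -> s2 <= S2m -> mu2 s1 < mu2 s2).
  { intros s1 s2 H1 H2. destruct (MVT_cor2 mu2 (Derive mu2) s1 s2) as [c [Hc1 Hc2]]; [lra| |].
    - intros c Hc. apply dmu. lra.
    - assert (Derive mu2 c > 0) by (apply hinc; lra). nra. }
  assert (mu_dec : forall s1 s2, S2m <= s1 < s2 -> mu2 s2 < mu2 s1).
  { intros s1 s2 H1. destruct (MVT_cor2 mu2 (Derive mu2) s1 s2) as [c [Hc1 Hc2]]; [lra| |].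
    - intros c Hc. apply dmu. lra.
    - assert (Derive mu2 c < 0) by (apply hdec; lra). nra. }
  assert (mu_pos : forall s, 0 < s -> 0 < mu2 s).
  { intros s Hs. destruct (Rle_dec s S2m).
    - rewrite <- hmu0. apply mu_inc; lra.
    - destruct (Rlt_dec 0 (mu2 s)) as [|Hn]; auto. exfalso.
      assert (Ht0 : mu2 (s + 1) < mu2 s) by (apply mu_dec; lra).
      apply is_lim_spec in hmu_lim. simpl in hmu_lim.
      assert (Hp : 0 < - mu2 (s+1)) by lra.
      destruct (hmu_lim (mkposreal _ Hp)) as [M HM]. simpl in HM.
      set (t := Rmax M (s + 1) + 1).
      assert (Ht1 : M < t /\ s + 1 < t) by (unfold t; split; [assert (Rmax M (s+1) >= M) by (apply Rle_ge, Rmax_l); lra|assert (Rmax M (s+1) >= s+1) by (apply Rle_ge, Rmax_r); lra]).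
      assert (H1 := HM t (proj1 Ht1)).
      assert (H2 : mu2 t < mu2 (s+1)) by (apply mu_dec; lra).
      rewrite Rminus_0_r in H1. revert H1. unfold Rabs; destruct Rcase_abs; intros; lra. }
  set (h := fun x => f2 mu2 S2in k3 x - g2 D2 X21 x).
  set (dh := fun x => Derive (f2 mu2 S2in k3) x - Derive (g2 D2 X21) x).
  assert (hder : forall x, 0 < x <= E -> derivable_pt_lim h x (dh x)).
  { intros x Hx. apply is_derive_Reals. unfold h, dh. apply (is_derive_minus (f2 mu2 S2in k3) (g2 D2 X21)); apply Derive_correct.
    - unfold f2. apply (ex_derive_comp mu2 (fun x => S2in - k3 * x)).
      + apply hmu_der. nra.
      + auto_derive. auto.
    - unfold g2. auto_derive. lra. }
  assert (hXpos : h X21 > 0).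
  { unfold h, f2, g2. replace (D2 * (X21 - X21) / X21) with 0 by (field; lra).
    assert (0 < mu2 (S2in - k3 * X21)) by (apply mu_pos; nra). lra. }
  assert (hEneg : h E < 0).
  { unfold h, f2, g2. rewrite HE, Rminus_diag, hmu0.
    assert (0 < D2 * (E - X21) / E) by (apply Rdiv_lt_0_compat; nra). lra. }
  assert (Hex : exists x, X21 < x < E /\ f2 mu2 S2in k3 x = g2 D2 X21 x).
  { destruct (IVT_interv (fun x => - h x) X21 E) as [z [Hz1 Hz2]]; [| lra | lra | lra |].
    - intros x Hx. apply continuity_pt_opp. apply derivable_continuous_pt.
      exists (dh x). apply hder. lra.
    - exists z. assert (h z = 0) by lra.
      destruct (Req_dec z X21) as [HzX|]; [rewrite HzX in *; lra|]. destruct (Req_dec z E) as [HzE|]; [rewrite HzE in *; lra|].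
      split; [lra|]. unfold h in *; lra. }
  split.
  - intros Hge. unfold x1m in Hge.
    assert (Hs0 : S2in - k3 * X21 <= S2m).
    { assert (k3 * ((S2in - S2m) / k3) = S2in - S2m) by (field; lra). nra. }
    destruct Hex as [x Hx]. exists x. split; auto.
    intros y Hy.
    assert (key : forall x1 x2, X21 < x1 < E -> X21 < x2 < E -> x1 < x2 ->
               f2 mu2 S2in k3 x1 = g2 D2 X21 x1 -> f2 mu2 S2in k3 x2 = g2 D2 X21 x2 -> False).
    { intros x1 x2 H1 H2 H12 E1 E2.
      assert (F : f2 mu2 S2in k3 x2 < f2 mu2 S2in k3 x1) by (unfold f2; apply mu_inc; nra).
      assert (G : g2 D2 X21 x2 - g2 D2 X21 x1 = D2 * X21 * (x2 - x1) / (x1 * x2))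
        by (unfold g2; field; lra).
      assert (0 < D2 * X21 * (x2 - x1) / (x1 * x2)).
      { apply Rdiv_lt_0_compat; [|nra]. apply Rmult_lt_0_compat; [nra|lra]. }
      lra. }
    destruct Hx as [Hx1 Hx2], Hy as [Hy1 Hy2].
    destruct (Rtotal_order x y) as [H|[H|H]]; auto; exfalso; [apply (key x y)|apply (key y x)]; auto.
  - intros Hlt. split; [exact Hex|]. intros Htr.
    destruct (odd_roots h dh X21 E) as [l [Hnd [Hl Hodd]]]; auto.
    + intros x Hx. apply hder. lra.
    + intros x Hx Hx0. unfold dh. intro Hc. apply (Htr x Hx); [unfold h in Hx0; lra|lra].
    + exists l. split; auto. split; auto. intros x. rewrite Hl. unfold h. split; intros [A B]; split; auto; lra.
Qed.
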